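(* Let $\alpha\in[0,1]$ and let $\mathbf{d}'$ be a delay function that is $\alpha$-bounded by a delay function $\mathbf{d}$. If $\alpha\le\frac{1}{2\cdot\mathrm{CB}(\#,\mathbf{d})\cdot|S'|}$, then $$E_{\mathcal{M}(\mathbf{d}')}\le E_{\mathcal{M}(\mathbf{d})}+2\cdot\alpha\cdot\mathrm{CB}(\#,\mathbf{d})\cdot\big(1+\mathrm{CB}(c,\mathbf{d})\cdot|S'|\big).$$
   Context: $C=(S,\lambda,\mathrm{P},S_{fd},\mathrm{F},s_{in})$ is a fdCTMC structure ($S$ finite, $\lambda>0$, $\mathrm{P}\in\mathbb{R}_{\ge0}^{S\times S}$, $\mathrm{F}\in\mathbb{R}_{\ge0}^{S_{fd}\times S}$ stochastic) with a cost structure $(G,\mathcal{R},\mathcal{I}_{\mathrm{P}},\mathcal{I}_{\mathrm{F}})$, $\mathcal{R}(s)>0$ for all $s$. For a delay function $\mathbf{d}:S_{fd}\to\mathbb{R}_{>0}$, $C(\mathbf{d})$ evolves from $(s_i,d_i)$ ($d_0=\mathbf{d}(s_{in})$ or $\infty$) by sampling an $\mathrm{Exp}(\lambda)$ time $t_i$; if $t_i<d_i$, $s_{i+1}\sim\mathrm{P}(s_i,\cdot)$, $d_{i+1}=d_i-t_i$ if $s_i,s_{i+1}\in S_{fd}$, $\mathbf{d}(s_{i+1})$ if $s_{i+1}\in S_{fd}\not\ni s_i$, $\infty$ if $s_{i+1}\notin S_{fd}$; otherwise $t_i=d_i$, $s_{i+1}\sim\mathrm{F}(s_i,\cdot)$,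 $d_{i+1}=\mathbf{d}(s_{i+1})$ or $\infty$. The cost of a run is $\sum_{i<n}(t_i\mathcal{R}(s_i)+I_i)$ up to the first $n>0$ with $s_n\in G$ ($I_i$ the $\mathcal{I}_{\mathrm{P}}$/$\mathcal{I}_{\mathrm{F}}$ impulse of the transition; $\infty$ if $G$ is never reached). Standing assumption: $S_{fd}=S^{reset}\uplus S^{keep}$ where $S^{reset}$ are the states entered by exp-delay transitions from $S\setminus S_{fd}$ or by fixed-delay transitions and $S^{keep}$ those entered by exp-delay transitions from $S_{fd}$; $s_{in}\in S^{reset}$ if $s_{in}\in S_{fd}$. $S'=S^{reset}\cup(S\setminus S_{fd})\cup G$. DTMDP $\mathcal{M}$: vertices $S'$, goal vertices $G$, actions $\mathbb{R}_{>0}$ enabled in $S^{reset}$ and $\infty$ enabled in $S\setminus S_{fd}$; for action $d$ in $s$, $T(s,d)(s')$ is the probability, in $C$ started in $s$ with delay $d$ set in $s$, that the first $S'$-state visited after at least one transition is $s'$, and $c(s,d)$ is the expected cost accumulated until then. Delay functions are memoryless strategies of $\mathcal{M}$; $\mathcal{M}[s]$ is $\mathcal{M}$ started in $s$; for a one-step cost function $\$$ on actions, $E^{\$}_{\mathcal{M}[s](\mathbf{d})}$ is the expected accumulated $\$$ before reaching $G$; $E_{\mathcal{M}(\mathbf{d})}=E^{c}_{\mathcal{M}[s_{in}](\mathbf{d})}$; $\mathrm{CB}(\$,\mathbf{d})=\max_{s\in S'}E^{\$}_{\mathcal{M}[s](\mathbf{d})}$; $\#$ assigns $1$ to every action. A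 delay function $\mathbf{d}^\star$ is $\alpha$-bounded by $\mathbf{d}$ if for all $s,t\in S'$: $|T(s,\mathbf{d}^\star(s))(t)-T(s,\mathbf{d}(s))(t)|\le\alpha$, $c(s,\mathbf{d}^\star(s))-c(s,\mathbf{d}(s))\le\alpha$, and $T(s,\mathbf{d}(s))(t)=0$ iff $T(s,\mathbf{d}^\star(s))(t)=0$. *)

(* Defs.v *)
From HB Require Import structures.
From mathcomp Require Import all_boot all_order all_algebra.
From mathcomp Require Import all_classical all_reals.
From mathcomp Require Import topology ereal normedtype sequences exp.
Set Implicit Arguments. Unset Strict Implicit. Unset Printing Implicit Defensive.
Import Order.TTheory GRing.Theory Num.Theory numFieldNormedType.Exports.
Local Open Scope ring_scope.

Record fdCTMC (R : realType) (S : finType) := FdCTMC {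
  rate : R;
  Pm : S -> S -> R;      (* P : exp-delay transition matrix *)
  Sfd : {set S};
  Fm : S -> S -> R;      (* F : fixed-delay transitions (meaningful on S_fd rows) *)
  sin : S }.

Record costs (R : realType) (S : finType) := Costs {
  goal : {set S};
  rew : S -> R;          (* rate cost R *)
  impP : S -> S -> R;
  impF : S -> S -> R }.

Section Defs.
Variables (R : realType) (S : finType) (C : fdCTMC R S) (K : costs R S).

Definition is_reset (s : S) : bool :=
  (s \in Sfd C) &&
  [|| s == sin C,
      [exists u, (u \notin Sfd C) && (0 < Pm C u s)] |
      [exists u, (u \in Sfd C) && (0 < Fm C u s)]].

Definition is_keep (s : S) : bool :=
  (s \in Sfd C) && [exists u, (u \in Sfd C) && (0 < Pm C u s)].

Definition Sprime (s : S) : bool :=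
  [|| is_reset s, s \notin Sfd C | s \in goal K].

Definition wf : Prop :=
  [/\ 0 < rate C,
      (forall s t, 0 <= Pm C s t) /\ (forall s, \sum_t Pm C s t = 1),
      (forall s t, s \in Sfd C -> 0 <= Fm C s t) /\
      (forall s, s \in Sfd C -> \sum_t Fm C s t = 1),
      (forall s, 0 < rew K s) /\ (forall s t, 0 <= impP K s t) /\
      (forall s t, 0 <= impF K s t)
    & (* standing assumption: S_fd = S^reset (disjoint union) S^keep, s_in in S^reset *)
      forall s, s \in Sfd C -> is_reset s (+) is_keep s ].

(* delay function d : S_fd -> R_{>0} (values outside S_fd are irrelevant) *)
Definition delay_fun (d : S -> R) : Prop := forall s, s \in Sfd C -> 0 < d s.

(* states visited strictly inside a fixed-delay period, not in S' *)
Definition Nst (s : S) : bool := (s \in Sfd C) && ~~ Sprime s.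

(* Poisson(lambda d) probability of exactly n exp-events in time d *)
Definition pois (d : R) (n : nat) : R :=
  expR (- (rate C * d)) * (rate C * d) ^+ n / n`!%:R.
(* probability of at least n+1 exp-events in time d *)
Definition ptail (d : R) (n : nat) : R := 1 - \sum_(k < n.+1) pois d k.

(* walk s n u = probability that the embedded jump chain started in s is in u
   after n jumps, all intermediate states (after the first) being in Nst. *)
Fixpoint walk (s : S) (n : nat) : S -> R :=
  match n with
  | 0 => fun u => (u == s)%:R
  | m.+1 => fun v => (Nst v)%:R * \sum_u walk s m u * Pm C u v
  end.

Definition rsum (f : nat -> R) : R := limn (series f).

(* actions: Some d (delay d) for states in S_fd, None (= infinity) otherwise *)
Definition act (d : S -> R) (s : S) : option R :=
  if s \in Sfd C then Some (d s) else None.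

Definition Tm (s : S) (a : option R) (t : S) : R :=
  if ~~ Sprime t then 0 else
  match a with
  | Some d => rsum (fun n => \sum_u walk s n u *
                (pois d n * Fm C u t + ptail d n * Pm C u t))
  | None => Pm C s t
  end.

(* c(s,a): expected cost accumulated until the first S'-state *)
Definition cm (s : S) (a : option R) : R :=
  match a with
  | Some d => rsum (fun n => \sum_u walk s n u *
                (ptail d n * (rew K u / rate C + \sum_v Pm C u v * impP K u v)
                 + pois d n * \sum_v Fm C u v * impF K u v))
  | None => rew K s / rate C + \sum_v Pm C s v * impP K s v
  end.

Definition pcount : S -> option R -> R := fun _ _ => 1.
Definition pcost : S -> option R -> R := cm.

(* distribution of M[s](d) at step n, restricted to runs not having visited G *)
Fixpoint dist (d : S -> R) (s : S) (n : nat) : S -> R :=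
  match n with
  | 0 => fun u => ((u == s) && (u \notin goal K))%:R
  | m.+1 => fun v => (Sprime v && (v \notin goal K))%:R *
                     \sum_u dist d s m u * Tm u (act d u) v
  end.

Definition Eacc (pay : S -> option R -> R) (d : S -> R) (s : S) : \bar R :=
  (\sum_(n <oo) ((\sum_u dist d s n u * pay u (act d u))%:E))%E.

Definition Etot (d : S -> R) : \bar R := Eacc pcost d (sin C).

Definition CB (pay : S -> option R -> R) (d : S -> R) : \bar R :=
  (\big[maxe/0%E]_(s | Sprime s) Eacc pay d s)%E.

Definition cardSp : R := #|[set s | Sprime s]|%:R.

(* d* is alpha-bounded by d (quantified over s in S' having an enabled action) *)
Definition alpha_bounded (alpha : R) (dstar d : S -> R) : Prop :=
  forall s t, Sprime s -> (is_reset s || (s \notin Sfd C)) -> Sprime t ->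
    [/\ `|Tm s (act dstar s) t - Tm s (act d s) t| <= alpha,
        cm s (act dstar s) - cm s (act d s) <= alpha
      & (Tm s (act d s) t == 0) = (Tm s (act dstar s) t == 0)].

End Defs.

(* Main.v *)
Require Import Defs.
From HB Require Import structures.
From mathcomp Require Import all_boot all_order all_algebra ssrAC.
From mathcomp Require Import all_classical all_reals.
From mathcomp Require Import topology ereal normedtype sequences exp.
From mathcomp Require Import ring lra.
Import Order.TTheory GRing.Theory Num.Theory numFieldNormedType.Exports.
Local Open Scope ring_scope.

Lemma rsum_ge0 (R : realType) (f : nat -> R) : (forall n, 0 <= f n) -> 0 <= rsum f.
Proof.
move=> f0; rewrite /rsum.
have [cv|ncv] := pselect (cvgn (series f)).
  apply: limr_ge => //.
  by apply: nearW => n; rewrite /series /=; apply: sumr_ge0 => i _; apply: f0.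
by rewrite (dvgP ncv).
Qed.

Lemma expsum_le (R : realType) (x : R) n : 0 <= x ->
  \sum_(k < n) x ^+ k / k`!%:R <= expR x.
Proof.
move=> x0.
have := @nondecreasing_cvgn_le _ (series (exp_coeff x)) _ (is_cvg_series_exp_coeff x) n.
rewrite /series /= big_mkord; apply.
apply/nondecreasing_seqP => m; rewrite /series /= big_nat_recr //= lerDl.
by rewrite /exp_coeff /= divr_ge0 // exprn_ge0.
Qed.

Section Aux.
Variables (R : realType) (S : finType) (C : fdCTMC R S) (K : costs R S).
Hypothesis W : wf C K.

Lemma ptail_ge0 d n : 0 <= rate C * d -> 0 <= ptail C d n.
Proof.
move=> x0; rewrite /ptail subr_ge0 /pois.
rewrite (eq_bigr (fun k : 'I_n.+1 => expR (- (rate C * d)) * ((rate C * d) ^+ k / k`!%:R))); last by move=> i _; rewrite mulrA.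
rewrite -mulr_sumr expRN ler_pdivrMl ?expR_gt0 // mulr1.
exact: expsum_le.
Qed.

Lemma pois_ge0 d n : 0 <= rate C * d -> 0 <= pois C d n.
Proof. by move=> x0; rewrite /pois divr_ge0 // mulr_ge0 ?expR_ge0 // exprn_ge0. Qed.

Lemma P_ge0 s t : 0 <= Pm C s t.
Proof. by case: W => _ [P0 _] _ _ _; apply: P0. Qed.

Lemma F_ge0 s t : s \in Sfd C -> 0 <= Fm C s t.
Proof. by case: W => _ _ [F0 _] _ _; apply: F0. Qed.

Lemma rate_gt0 : 0 < rate C.
Proof. by case: W. Qed.

Lemma walk_ge0 s n u : 0 <= walk C K s n u.
Proof.
elim: n u => [|n IH] u /=; first by [].
apply: mulr_ge0 => //; apply: sumr_ge0 => v _; apply: mulr_ge0 => //; exact: P_ge0.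
Qed.

Lemma walk_Sfd s n u : s \in Sfd C -> walk C K s n u != 0 -> u \in Sfd C.
Proof.
case: n => [|n] /= sS.
  by have [->|] := eqVneq u s; rewrite ?eqxx.
by rewrite /Nst; case: (u \in Sfd C) => //=; rewrite mul0r eqxx.
Qed.

Lemma walkF_ge0 s n u t : s \in Sfd C -> 0 <= walk C K s n u * Fm C u t.
Proof.
move=> sS; have [->|nz] := eqVneq (walk C K s n u) 0; first by rewrite mul0r.
by apply: mulr_ge0; [exact: walk_ge0 | apply: F_ge0; exact: (@walk_Sfd s n u sS nz)].
Qed.

Lemma Tm_ge0 dd s t : delay_fun C dd -> 0 <= Tm C K s (act C dd s) t.
Proof.
move=> dp; rewrite /Tm /act; case: (Sprime C K t) => //=.
case sS: (s \in Sfd C); last exact: P_ge0.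
have x0 : 0 <= rate C * dd s by rewrite mulr_ge0 // ?ltW // ?rate_gt0 // dp.
apply: rsum_ge0 => n; apply: sumr_ge0 => u _.
rewrite mulrDr; apply: addr_ge0.
  by rewrite mulrCA; apply: mulr_ge0; [exact: pois_ge0|exact: walkF_ge0].
by apply: mulr_ge0; [exact: walk_ge0| apply: mulr_ge0; [exact: ptail_ge0|exact: P_ge0]].
Qed.

Lemma cm_ge0 dd s : delay_fun C dd -> 0 <= cm C K s (act C dd s).
Proof.
case: W => _ _ [F0 _] [r0 [iP iF]] _ dp.
have base u : 0 <= rew K u / rate C + \sum_v Pm C u v * impP K u v.
  apply: addr_ge0; first by rewrite divr_ge0 ?ltW // ?rate_gt0.
  by apply: sumr_ge0 => v _; apply: mulr_ge0; [exact: P_ge0|].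
rewrite /cm /act; case sS: (s \in Sfd C) => //.
have x0 : 0 <= rate C * dd s by rewrite mulr_ge0 // ?ltW // ?rate_gt0 // dp.
apply: rsum_ge0 => n; apply: sumr_ge0 => u _.
have [->|nz] := eqVneq (walk C K s n u) 0; first by rewrite mul0r.
have uS := @walk_Sfd s n u sS nz.
apply: mulr_ge0; first exact: walk_ge0.
apply: addr_ge0; apply: mulr_ge0; rewrite ?ptail_ge0 ?pois_ge0 //.
by apply: sumr_ge0 => v _; apply: mulr_ge0; [apply: F0|].
Qed.


Definition aS v := Sprime C K v && (v \notin goal K).

Lemma dist_first dd s n v :
  dist C K dd s n.+1 v = (s \notin goal K)%:R *
    \sum_w Tm C K s (act C dd s) w * (aS w)%:R * dist C K dd w n v.
Proof.
elim: n v => [|n IH] v.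
  rewrite /= (bigD1 s) //= big1 ?addr0; last first.
    by move=> u /negbTE ->; rewrite mul0r.
  rewrite (bigD1 v) //= big1 ?addr0; last first.
    by move=> u /negbTE; rewrite eq_sym => ->; rewrite andFb mulr0.
  rewrite eqxx /=; rewrite /aS.
  by rewrite eqxx; case: (Sprime C K v); case: (v \in goal K); case: (s \in goal K) => /=;
     rewrite ?(mulr0n, mulr1n, mul0r, mulr0, mul1r, mulr1).
set g := (s \notin goal K)%:R.
set A := fun w => Tm C K s (act C dd s) w * (aS w)%:R.
have E1 : dist C K dd s n.+2 v = (aS v)%:R * \sum_u dist C K dd s n.+1 u * Tm C K u (act C dd u) v by [].
have E2 w : dist C K dd w n.+1 v = (aS v)%:R * \sum_u dist C K dd w n u * Tm C K u (act C dd u) v by [].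
rewrite E1.
transitivity (\sum_u \sum_w (aS v)%:R * g * A w * dist C K dd w n u * Tm C K u (act C dd u) v).
  rewrite mulr_sumr; apply: eq_bigr => u _.
  rewrite IH -/g !mulr_sumr !mulr_suml !mulr_sumr; apply: eq_bigr => w _.
  by rewrite /A; ring.
rewrite exchange_big mulr_sumr; apply: eq_bigr => w _ /=.
rewrite !mulr_sumr; apply: eq_bigr => u _.
by rewrite /A; ring.
Qed.


Lemma dist_ge0 dd s n u : delay_fun C dd -> 0 <= dist C K dd s n u.
Proof.
move=> dp; elim: n u => [|n IH] u /=; first by [].
apply: mulr_ge0 => //; apply: sumr_ge0 => w _; apply: mulr_ge0 => //.
exact: Tm_ge0.
Qed.

Definition term (pay : S -> option R -> R) dd s n :=
  \sum_u dist C K dd s n u * pay u (act C dd u).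

Lemma term0 pay dd s : term pay dd s 0 = (s \notin goal K)%:R * pay s (act C dd s).
Proof.
rewrite /term (bigD1 s) //= big1 ?addr0 ?eqxx //.
by move=> u /negbTE ->; rewrite mul0r.
Qed.

Lemma term_first pay dd s n : term pay dd s n.+1 = (s \notin goal K)%:R *
  \sum_w Tm C K s (act C dd s) w * (aS w)%:R * term pay dd w n.
Proof.
rewrite /term; under eq_bigr do rewrite dist_first.
transitivity (\sum_u \sum_w (s \notin goal K)%:R * Tm C K s (act C dd s) w * (aS w)%:R *
   dist C K dd w n u * pay u (act C dd u)).
  apply: eq_bigr => u _; rewrite !mulr_sumr !mulr_suml; apply: eq_bigr => w _; ring.
rewrite exchange_big mulr_sumr; apply: eq_bigr => w _ /=.
rewrite !mulr_sumr; apply: eq_bigr => u _; ring.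
Qed.

Lemma term_ge0 pay dd s n : delay_fun C dd -> (forall u, 0 <= pay u (act C dd u)) ->
  0 <= term pay dd s n.
Proof.
move=> dp hp; apply: sumr_ge0 => u _; apply: mulr_ge0; [exact: dist_ge0|exact: hp].
Qed.

Local Open Scope ereal_scope.

Lemma Eacc_ge0 pay dd s : delay_fun C dd -> (forall u, (0 <= pay u (act C dd u))%R) ->
  0 <= Eacc C K pay dd s.
Proof.
move=> dp hp; apply: nneseries_ge0 => n _ _; rewrite lee_fin; exact: term_ge0.
Qed.

Lemma bellman pay dd s : delay_fun C dd -> (forall u, (0 <= pay u (act C dd u))%R) ->
  Eacc C K pay dd s = ((s \notin goal K)%:R * pay s (act C dd s))%:E +
    \sum_w ((s \notin goal K)%:R * Tm C K s (act C dd s) w * (aS w)%:R)%:E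
           * Eacc C K pay dd w.
Proof.
move=> dp hp.
have t0 w n : 0 <= (term pay dd w n)%:E by rewrite lee_fin; exact: term_ge0.
rewrite /Eacc -/(term pay dd s) nneseries_recl //.
rewrite -/(term pay dd s 0) term0; congr (_ + _).
rewrite -nneseries_addn //; last by move=> i; apply: t0.
pose c w := ((s \notin goal K)%:R * Tm C K s (act C dd s) w * (aS w)%:R)%R.
have c0 w : 0 <= (c w)%:E.
  by rewrite lee_fin /c !mulr_ge0 //; exact: Tm_ge0.
transitivity (\sum_(i <oo) \sum_w (c w)%:E * (term pay dd w i)%:E).
  apply: eq_eseriesr => i _; rewrite addn1 -/(term pay dd s _) term_first.
  rewrite mulr_sumr -sumEFin; apply: eq_bigr => w _; rewrite -EFinM /c; congr (_%:E).
  by rewrite !mulrA.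
rewrite nneseries_sum; last by move=> w i _; apply: mule_ge0.
apply: eq_bigr => w _; rewrite nneseriesZl //.
by move=> k _; apply: t0.
Qed.

Local Close Scope ereal_scope.

Definition Pn pay dd s n := \sum_(k < n) term pay dd s k.

Lemma Pn_succ pay dd s n : Pn pay dd s n.+1 =
  (s \notin goal K)%:R * pay s (act C dd s) +
  (s \notin goal K)%:R * \sum_w Tm C K s (act C dd s) w * (aS w)%:R * Pn pay dd w n.
Proof.
rewrite /Pn big_ord_recl /= term0; congr (_ + _).
under eq_bigr => i _ do rewrite (_ : bump 0 i = i.+1) // term_first.
rewrite -mulr_sumr; congr (_ * _).
rewrite exchange_big /=; apply: eq_bigr => w _; rewrite mulr_sumr //.
Qed.

Lemma Eacc_lim pay dd s : Eacc C K pay dd s =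
  limn (fun n => \sum_(0 <= k < n) (term pay dd s k)%:E)%E.
Proof. by []. Qed.

Lemma aS_ok w : aS w -> [/\ Sprime C K w, (is_reset C w || (w \notin Sfd C)) & w \notin goal K].
Proof.
rewrite /aS /Sprime; case/andP => /orP[->|/orP[->|->]] //= ->.
by rewrite orbT.
Qed.

End Aux.
Arguments aS {R S} C K v.
Arguments term {R S} C K pay dd s n.
Arguments Pn {R S} C K pay dd s n.

Lemma card_lem (R : realType) (S : finType) (C : fdCTMC R S) (K : costs R S) :
  (\sum_w (Sprime C K w)%:R : R) = cardSp C K.
Proof.
rewrite /cardSp (eq_bigr (fun w => if Sprime C K w then 1 else 0)); last first.
  by move=> w _; case: (Sprime C K w).
rewrite -big_mkcond /= sumr_const cardsE //.
Qed.

Local Open Scope ereal_scope.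

Lemma cb_lem (R : realType) (S : finType) (C : fdCTMC R S) (K : costs R S) pay d w :
  Sprime C K w -> Eacc C K pay d w <= CB C K pay d.
Proof. move=> h; rewrite /CB; exact: (le_bigmax_cond _ _ h). Qed.

Lemma final_ineq (R : realType) (cp c al SX SY AX AY Cc B card D : \bar R) :
  0 <= c -> 0 <= al -> 0 <= SX -> 0 <= SY -> 0 <= AX -> 0 <= AY ->
  0 <= Cc -> 0 <= B -> 0 <= card ->
  cp <= c + al -> AX <= card * Cc -> AY <= card * B ->
  2%:E * al * B * card <= 1 -> D = al * (1 + Cc * card) ->
  cp + ((SX + al * AX) + (2%:E * D * SY + 2%:E * D * (al * AY)))
    <= c + SX + 2%:E * D * (1 + SY).
Proof.
move=> c0 a0 SX0 SY0 AX0 AY0 Cc0 B0 k0 hcp hAX hAY hB hD.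
have D0 : 0 <= D by rewrite hD mule_ge0 // adde_ge0 // mule_ge0.
have tD0 : 0 <= 2%:E * D by rewrite mule_ge0.
have h1 : al * AX <= al * (Cc * card) by apply: lee_wpmul2l => //; rewrite muleC.
have h2 : 2%:E * D * (al * AY) <= D.
  apply: (@le_trans _ _ (2%:E * D * (al * (card * B)))).
    by apply: lee_wpmul2l => //; apply: lee_wpmul2l.
  rewrite -[leRHS]mule1 (_ : _ * (al * (card * B)) = D * (2%:E * al * B * card)).
    exact: lee_wpmul2l.
  by rewrite [LHS](AC (1*1*(1*2)) (2*(1*3*5*4))).
have hD2 : 2%:E * D = D + D by rewrite -mule2n /= mule_natl.
apply: (@le_trans _ _ ((c + al) + ((SX + al * (Cc * card)) + (2%:E * D * SY + D)))).
  by apply: leeD => //; apply: leeD; apply: leeD.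
rewrite ge0_muleDr // ?mule1 // hD2.
rewrite [leLHS](AC (2*(2*2)) (1*3*(2*4*6*5))) /=.
have -> : al + al * (Cc * card) = D by rewrite hD ge0_muleDr ?mule1 // mule_ge0.
by [].
Qed.

Local Close Scope ereal_scope.

Theorem lemma2 (R : realType) (S : finType) (C : fdCTMC R S) (K : costs R S)
    (alpha : R) (d d' : S -> R) :
  wf C K -> delay_fun C d -> delay_fun C d' ->
  0 <= alpha <= 1 ->
  alpha_bounded C K alpha d' d ->
  (2%:E * alpha%:E * CB C K (pcount (S:=S)) d * (cardSp C K)%:E <= 1)%E ->
  (Etot C K d' <= Etot C K d
     + 2%:E * alpha%:E * CB C K (pcount (S:=S)) d
         * (1 + CB C K (pcost C K) d * (cardSp C K)%:E))%E.
Proof.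
move=> W dp dp' /andP[a0 a1] ab hB.
set B := CB C K (pcount (S:=S)) d.
set Cc := CB C K (pcost C K) d.
set card := cardSp C K.
set X := Eacc C K (pcost C K) d.
set Y := Eacc C K (pcount (S:=S)) d.
set D := (alpha%:E * (1 + Cc * card%:E))%E.
have hpc dd : delay_fun C dd -> forall u, (0 <= pcost C K u (act C dd u))%R.
  by move=> dq u; exact: cm_ge0.
have hp1 dd : forall u, (0 <= @pcount R S u (act C dd u))%R by move=> u; exact: ler01.
have X0 w : (0 <= X w)%E by apply: Eacc_ge0 => //; exact: hpc.
have Y0 w : (0 <= Y w)%E by apply: Eacc_ge0 => //; exact: hp1.
have sinS : Sprime C K (sin C).
  rewrite /Sprime /is_reset; case: (sin C \in Sfd C) => //=; by rewrite eqxx.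
have Cc0 : (0 <= Cc)%E by apply: le_trans (X0 (sin C)) _; exact: cb_lem.
have B0 : (0 <= B)%E by apply: le_trans (Y0 (sin C)) _; exact: cb_lem.
have k0 : (0 <= card%:E)%E.
  by rewrite lee_fin /card /cardSp ler0n.
have D0 : (0 <= D)%E by rewrite mule_ge0 // ?lee_fin // adde_ge0 // mule_ge0.
have tD0 : (0 <= 2%:E * D)%E by rewrite mule_ge0.
have key : forall n s, Sprime C K s ->
    ((Pn C K (pcost C K) d' s n)%:E <= X s + 2%:E * D * Y s)%E.
  elim => [|n IH] s sS.
    by rewrite /Pn big_ord0; apply: adde_ge0 => //; exact: mule_ge0.
  rewrite Pn_succ.
  case sG: (s \in goal K) => /=.
    by rewrite !mul0r addr0; apply: adde_ge0 => //; exact: mule_ge0.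
  rewrite mulr1n !mul1r.
  have [_ sok _] : [/\ Sprime C K s, (is_reset C s || (s \notin Sfd C)) & s \notin goal K].
    by apply: (@aS_ok R S C K s); rewrite /aS sS sG.
  set T' := fun w => Tm C K s (act C d' s) w.
  set T := fun w => Tm C K s (act C d s) w.
  set SX := (\sum_w (T w * (aS C K w)%:R)%:E * X w)%E.
  set SY := (\sum_w (T w * (aS C K w)%:R)%:E * Y w)%E.
  set AX := (\sum_w ((aS C K w)%:R)%:E * X w)%E.
  set AY := (\sum_w ((aS C K w)%:R)%:E * Y w)%E.
  have hX : X s = ((cm C K s (act C d s))%:E + SX)%E.
    rewrite /X (@bellman R S C K W (pcost C K) d s dp (hpc d dp)) sG /= mulr1n mul1r.
    by congr (_ + _)%E; apply: eq_bigr => w _; rewrite mul1r.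
  have hY : Y s = (1%:E + SY)%E.
    rewrite /Y (@bellman R S C K W (@pcount R S) d s dp (hp1 d)) sG /= mulr1n mul1r.
    by congr (_ + _)%E; apply: eq_bigr => w _; rewrite mul1r.
  have [_ hc _] := ab s s sS sok sS.
  have Pn0 w : (0 <= (Pn C K (pcost C K) d' w n)%:E)%E.
    by rewrite lee_fin; apply: sumr_ge0 => k _; apply: term_ge0 => //; exact: hpc.
  have hterm w : ((T' w * (aS C K w)%:R * Pn C K (pcost C K) d' w n)%:E <=
      ((T w + alpha) * (aS C K w)%:R)%:E * (X w + 2%:E * D * Y w))%E.
    case aw: (aS C K w); last by rewrite !(mulr0, mul0r) mul0e.
    have [wS wok _] := @aS_ok R S C K w aw.
    have [h1 _ _] := ab s w sS sok wS.
    rewrite /= !mulr1 EFinM; apply: lee_pmul => //.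
      by rewrite lee_fin; apply: Tm_ge0.
    rewrite lee_fin; have := le_trans (ler_norm _) h1; rewrite /T /T'; lra.
    exact: IH.
  have F := @final_ineq R (cm C K s (act C d' s))%:E (cm C K s (act C d s))%:E alpha%:E SX SY AX AY Cc B card%:E D.
  have c0 : (0 <= (cm C K s (act C d s))%:E)%E by rewrite lee_fin; exact: cm_ge0.
  have ge0T w : (0 <= (T w * (aS C K w)%:R)%:E)%E.
    by rewrite lee_fin mulr_ge0 //; exact: Tm_ge0.
  have SX0 : (0 <= SX)%E by apply: sume_ge0 => w _; apply: mule_ge0.
  have SY0 : (0 <= SY)%E by apply: sume_ge0 => w _; apply: mule_ge0.
  have AX0 : (0 <= AX)%E by apply: sume_ge0 => w _; apply: mule_ge0; rewrite // lee_fin.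
  have AY0 : (0 <= AY)%E by apply: sume_ge0 => w _; apply: mule_ge0; rewrite // lee_fin.
  have hcp : ((cm C K s (act C d' s))%:E <= (cm C K s (act C d s))%:E + alpha%:E)%E.
    by rewrite -EFinD lee_fin; lra.
  have hA (Z : S -> \bar R) (M : \bar R) : (forall w, 0 <= Z w)%E ->
      (forall w, Sprime C K w -> Z w <= M)%E ->
      (\sum_w ((aS C K w)%:R)%:E * Z w <= card%:E * M)%E.
    move=> Z0 ZM; have M0 : (0 <= M)%E by apply: le_trans (Z0 (sin C)) (ZM _ sinS).
    rewrite /card -card_lem -sumEFin ge0_sume_distrl; last by move=> w _; rewrite lee_fin.
    apply: lee_sum => w _.
    case aw: (aS C K w).
      have [wS _ _] := @aS_ok R S C K w aw.
      by rewrite wS /= mulr1n !mul1e; exact: ZM.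
    by rewrite /= mul0e; apply: mule_ge0 => //; rewrite lee_fin; case: (Sprime C K w).
  have hAX : (AX <= card%:E * Cc)%E by apply: hA => // w wS; exact: cb_lem.
  have hAY : (AY <= card%:E * B)%E by apply: hA => // w wS; exact: cb_lem.
  rewrite hX hY EFinD -sumEFin.
  apply: le_trans (F c0 _ SX0 SY0 AX0 AY0 Cc0 B0 k0 hcp hAX hAY hB erefl); last by rewrite lee_fin.
  apply: leeD => //.
  apply: (@le_trans _ _ (\sum_w (((T w + alpha) * (aS C K w)%:R)%:E * (X w + 2%:E * D * Y w)))%E).
    by apply: lee_sum => w _; exact: hterm.
  rewrite (eq_bigr (fun w => (((T w * (aS C K w)%:R)%:E * X w + alpha%:E * (((aS C K w)%:R)%:E * X w)) + (2%:E * D * ((T w * (aS C K w)%:R)%:E * Y w) + 2%:E * D * (alpha%:E * (((aS C K w)%:R)%:E * Y w))))%E)); last first.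
    move=> w _.
    have hz : (0 <= (alpha * (aS C K w)%:R)%:E)%E by rewrite lee_fin mulr_ge0 // ler0n.
    have hY' : (0 <= 2%:E * D * Y w)%E by apply: mule_ge0.
    rewrite mulrDl EFinD (ge0_muleDl _ (ge0T w) hz) !(ge0_muleDr _ (X0 w) hY') EFinM.
    set p := (T w * (aS C K w)%:R)%:E.
    set q := ((aS C K w)%:R)%:E.
    have e1 : (p * (2%:E * D * Y w) = 2%:E * D * (p * Y w))%E by rewrite muleCA.
    have e2 : (alpha%:E * q * X w = alpha%:E * (q * X w))%E by rewrite muleA.
    have e3 : (alpha%:E * q * (2%:E * D * Y w) = 2%:E * D * (alpha%:E * (q * Y w)))%E.
      by rewrite [LHS](AC (2*(2*1)) ((3*4)*(1*(2*5)))).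
    rewrite e1 e2 e3.
    by rewrite [LHS](AC (2*2) (1*3*(2*4))).
  rewrite !big_split /=.
  by rewrite -!ge0_sume_distrr // => i _;
    repeat (apply: mule_ge0); rewrite ?lee_fin ?ler0n //; solve [exact: X0 | exact: Y0 | exact: ge0T].
rewrite /Etot Eacc_lim; apply: lime_le.
  by apply: is_cvg_nneseries => k _ _; rewrite lee_fin; exact: (@term_ge0 R S C K W (pcost C K) d' (sin C) k dp' (hpc d' dp')).
apply: nearW => n; rewrite big_mkord sumEFin.
apply: le_trans (key n (sin C) sinS) _.
apply: leeD => //.
have -> : (2%:E * alpha%:E * B * (1 + Cc * card%:E) = 2%:E * D * B)%E.
  by rewrite /D [RHS](AC (1*2*1) (1*2*4*3)).
by apply: lee_wpmul2l => //; exact: cb_lem.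
Qed.
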